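(* Let $p\ge1$ be an integer, let $\lambda$ be a random variable with the beta distribution $\mathrm{Beta}(1,p)$, i.e. with density $p(1-t)^{p-1}$ on $[0,1]$, and let $Z$ be a random variable whose conditional distribution given $\lambda=t$ is Poisson with mean $t$ (so $Z$ has the beta-Poisson distribution). Then for every integer $n\ge0$ and every real $x$, $$\mathcal{B}_{n,p}(x)=\mathbb{E}\big[(x+Z)^n\big].$$
   Context: For an integer $p\ge0$, the $p$-Bell numbers $\mathcal{B}_{n,p}$ are defined by $\sum_{n\ge0}\mathcal{B}_{n,p}\frac{z^n}{n!}=\sum_{n\ge0}\binom{n+p}{p}^{-1}\frac{(e^z-1)^n}{n!}$, and the $p$-Bell polynomials by $\mathcal{B}_{n,p}(x)=\sum_{k=0}^n\binom nk\mathcal{B}_{k,p}x^{n-k}$. *)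

(* Defs.v *)
From HB Require Import structures.
From mathcomp Require Import all_boot all_order all_algebra.
From mathcomp Require Import all_classical all_reals all_analysis.
Set Implicit Arguments. Unset Strict Implicit. Unset Printing Implicit Defensive.
Import Order.TTheory GRing.Theory Num.Theory.
Local Open Scope ring_scope.

Section FPS.
Variable R : realType.

Definition fps_mul (f g : nat -> R) : nat -> R :=
  fun n => \sum_(i < n.+1) f i * g (n - i)%N.

Definition fps_one : nat -> R := fun n => if n == 0%N then 1 else 0.

Definition fps_exp (f : nat -> R) (k : nat) : nat -> R := iter k (fps_mul f) fps_one.

Definition expm1_fps : nat -> R :=
  fun m => if m == 0%N then 0 else (m`!%:R)^-1.

(* p-Bell numbers: B_{n,p} = n! [z^n] sum_{k>=0} binom(k+p,p)^{-1} (e^z-1)^k / k!.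
   Since (e^z-1)^k has no coefficient below z^k, only k <= n contribute to [z^n]. *)
Definition pBell (p n : nat) : R :=
  n`!%:R * \sum_(k < n.+1)
     ('C(k + p, p)%:R)^-1 * (fps_exp expm1_fps k n / (k`!)%:R).

Definition pBell_poly (p n : nat) (x : R) : R :=
  \sum_(k < n.+1) 'C(n, k)%:R * pBell p k * x ^+ (n - k).

Definition beta1p_density (p : nat) (t : R) : R :=
  if (0 <= t) && (t <= 1) then p%:R * (1 - t) ^+ p.-1 else 0.

Definition poisson_mass (t : R) (k : nat) : R :=
  expR (- t) * t ^+ k / (k`!)%:R.

End FPS.

(* Main.v *)
Require Import Defs.
From HB Require Import structures.
From mathcomp Require Import all_boot all_order all_algebra.
From mathcomp Require Import all_classical all_reals all_analysis.
From mathcomp Require Import measurable_realfun beta_distribution.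
From mathcomp Require Import zify ring lra.
Import Order.TTheory GRing.Theory Num.Theory.
Import numFieldTopology.Exports.
Local Open Scope classical_set_scope.
Local Open Scope ring_scope.

Section Alg.
Variable R : realType.

Lemma fps_exp_poly (f : nat -> R) k n N : (n < N)%N ->
  fps_exp f k n = ((\poly_(i < N) f i) ^+ k)`_n.
Proof.
elim: k n => [|k IH] n nN.
  by rewrite expr0 coef1 /fps_exp /= /fps_one; case: (n == 0%N).
rewrite exprS coefM /fps_exp /= -/(fps_exp f k) /fps_mul.
apply: eq_bigr => i _; rewrite coef_poly.
have iN : (i < N)%N by apply: leq_ltn_trans nN; rewrite -ltnS.
rewrite iN IH //; apply: leq_ltn_trans nN; exact: leq_subr.
Qed.

Lemma sum_widen (F : nat -> R) a b : (a <= b)%N ->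
  (forall j, (a <= j)%N -> F j = 0) -> \sum_(j < a) F j = \sum_(j < b) F j.
Proof.
move=> ab F0; rewrite -(big_mkord xpredT) -(big_mkord xpredT).
rewrite (@big_cat_nat _ _ _ a 0%N b) //= [X in _ + X]big1_seq ?addr0 // => j.
by rewrite mem_index_iota => /andP[_ /andP[/F0 -> _]].
Qed.

Lemma e0 j m : (m < j)%N -> fps_exp (expm1_fps R) j m = 0.
Proof.
elim: j m => [//|j IH] m mj.
rewrite /fps_exp /= -/(fps_exp _ j) /fps_mul big1 // => [[i /= ilt]] _.
case: i ilt => [|i] ilt; first by rewrite /expm1_fps /= mul0r.
rewrite IH ?mulr0 //; lia.
Qed.

Lemma expk_coef (k m N : nat) : (m < N)%N ->
  ((\poly_(i < N) ((i`!)%:R)^-1 : {poly R}) ^+ k)`_m = (k%:R ^+ m) / (m`!)%:R.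
Proof.
elim: k m => [|k IH] m mN.
  rewrite expr0 coef1 expr0n; case: m mN => [|m] _; first by rewrite fact0 divr1. by rewrite mul0r.

rewrite exprS coefM.
rewrite -natr1 exprDn.
rewrite mulr_suml; apply: eq_bigr => [[i /= ilt]] _.
have iN : (i < N)%N by lia.
have miN : (m - i < N)%N by lia.
rewrite coef_poly iN IH // expr1n mulr1.
have im : (i <= m)%N by lia.
have bf := @bin_fact m i im.
rewrite -mulr_natr -bf !natrM.
have fi : (i`!)%:R != 0 :> R by rewrite pnatr_eq0 -lt0n fact_gt0.
have fm : ((m - i)`!)%:R != 0 :> R by rewrite pnatr_eq0 -lt0n fact_gt0.
have fb : ('C(m,i))%:R != 0 :> R by rewrite pnatr_eq0 -lt0n bin_gt0.
rewrite mul1r -mulr_natr. field. by rewrite fi fm fb.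
Qed.

Lemma key_identity (k m : nat) :
  (k%:R ^+ m : R) = (m`!)%:R * \sum_(j < m.+1) ('C(k, j))%:R * fps_exp (expm1_fps R) j m.
Proof.
set N := m.+1.
have mN : (m < N)%N by [].
have E : (\poly_(i < N) ((i`!)%:R)^-1 : {poly R}) = \poly_(i < N) expm1_fps R i + 1.
  apply/polyP => i; rewrite coefD coef1 !coef_poly /expm1_fps.
  case: ifP => iN; case: i iN => [|i] iN //=; by rewrite ?fact0 ?invr1 ?add0r ?addr0.
have := @expk_coef k m N mN; rewrite E exprD1n coef_sum => H.
have fm : (m`!)%:R != 0 :> R by rewrite pnatr_eq0 -lt0n fact_gt0.
apply: (@mulIf _ ((m`!)%:R)^-1); first by rewrite invr_eq0.
rewrite -H mulrC mulrA mulVf // mul1r.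
rewrite (@sum_widen (fun j => ('C(k, j))%:R * fps_exp (expm1_fps R) j m) m.+1 (k + m).+1); last 2 first.
- by rewrite ltnS leq_addl.
- by move=> j jm; rewrite e0 ?mulr0.
rewrite (@sum_widen (fun i => ((\poly_(i0 < N) expm1_fps R i0) ^+ i *+ 'C(k, i))`_m) k.+1 (k + m).+1); last 2 first.
- by rewrite ltnS leq_addr.
- by move=> j jm; rewrite bin_small ?mulr0n ?coef0.
apply: eq_bigr => i _; rewrite coefMn -fps_exp_poly // mulr_natl //.
Qed.


Definition cc (n : nat) (x : R) (j : nat) : R :=
  \sum_(m < n.+1) 'C(n, m)%:R * x ^+ (n - m) * (m`!)%:R * fps_exp (expm1_fps R) j m.

Lemma A1 n (x : R) (k : nat) :
  (x + k%:R) ^+ n = \sum_(j < n.+1) cc n x j * 'C(k, j)%:R.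
Proof.
rewrite exprDn.
transitivity (\sum_(i < n.+1) \sum_(j < n.+1)
   'C(n, i)%:R * x ^+ (n - i) * (i`!)%:R * fps_exp (expm1_fps R) j i * 'C(k, j)%:R).
  apply: eq_bigr => [[i ilt]] _ /=.
  rewrite -mulr_natl key_identity.
  rewrite (@sum_widen (fun j => ('C(k, j))%:R * fps_exp (expm1_fps R) j i) i.+1 n.+1) //; last first.
    by move=> j ij; rewrite e0 ?mulr0.
  rewrite !mulr_sumr; apply: eq_bigr => j _; ring.
rewrite exchange_big /=; apply: eq_bigr => j _.
by rewrite /cc mulr_suml.
Qed.

Lemma A2 n (x : R) (p : nat) :
  \sum_(j < n.+1) cc n x j * (('C(j + p, p)%:R)^-1 / (j`!)%:R) = pBell_poly p n x.
Proof.
rewrite /pBell_poly.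
transitivity (\sum_(m < n.+1) \sum_(j < n.+1)
   'C(n, m)%:R * x ^+ (n - m) * (m`!)%:R * fps_exp (expm1_fps R) j m * (('C(j + p, p)%:R)^-1 / (j`!)%:R)).
  rewrite exchange_big /=; apply: eq_bigr => j _.
  by rewrite /cc mulr_suml.
apply: eq_bigr => [[m mlt]] _ /=.
rewrite /pBell.
rewrite (@sum_widen (fun k => ('C(k + p, p)%:R)^-1 * (fps_exp (expm1_fps R) k m / (k`!)%:R)) m.+1 n.+1) //; last first.
  by move=> j ij; rewrite e0 ?mul0r ?mulr0.
rewrite [RHS]mulrC !mulr_sumr; apply: eq_bigr => j _; ring.
Qed.

End Alg.

Section Ana.
Variables (R : realType) (d : measure_display) (T : measurableType d) (P : probability T R) (Z : T -> nat).
Hypothesis HZ : forall k, measurable (Z @^-1` [set k]).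

Lemma mZ (h : nat -> R) : measurable_fun setT (fun w => h (Z w)).
Proof.
move=> _ B mB; rewrite setTI.
have -> : (fun w => h (Z w)) @^-1` B = \bigcup_(k in [set k | B (h k)]) Z @^-1` [set k].
  by apply/seteqP; split => [w Bw|w [k Bk /= Zk]] //=; [exists (Z w)|rewrite Zk].
by apply: bigcup_measurable => k _; exact: HZ.
Qed.

Local Open Scope ereal_scope.
Lemma S1 (h : nat -> R) : (forall k, (0 <= h k)%R) ->
  \int[P]_w (h (Z w))%:E = \sum_(k <oo) (h k)%:E * P (Z @^-1` [set k]).
Proof.
move=> h0.
have := @ge0_integral_bigcup _ _ _ P (fun k => Z @^-1` [set k]) (fun w => (h (Z w))%:E) HZ.
have -> : \bigcup_k Z @^-1` [set k] = setT.
  by apply/seteqP; split => // w _; exists (Z w).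
move=> ->.
- apply: eq_eseriesr => k _.
  rewrite -integral_cst //; apply: eq_integral => w; rewrite inE => /= ->; done.
- exact/measurable_EFinP/mZ.
- by move=> w _; rewrite lee_fin.
- exact: trivIset_preimage1.
Qed.
End Ana.

Section Leb.
Variable R : realType.
Local Open Scope ereal_scope.

Lemma exp_series (t : R) : \sum_(k <oo) ((t ^+ k / (k`!)%:R)%:E) = (expR t)%:E.
Proof.
rewrite /expR -EFin_lim; last exact: is_cvg_series_exp_coeff.
apply: congr_lim; apply/funext => n /=; rewrite /series /= sumEFin.
by [].
Qed.

Lemma Ser (t : R) j : (0 <= t)%R ->
  \sum_(k <oo) (('C(k, j)%:R * (t ^+ k / (k`!)%:R))%:E) = ((t ^+ j / (j`!)%:R) * expR t)%:E.
Proof.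
move=> t0.
have f0 : forall k, 0 <= (('C(k, j)%:R * (t ^+ k / (k`!)%:R))%:E).
  by move=> k; rewrite lee_fin mulr_ge0 // divr_ge0 // exprn_ge0.
rewrite (nneseries_split 0 j) //.
rewrite big_nat_cond big1 ?add0e; last by move=> k /andP[/andP[_ kj] _]; rewrite bin_small ?mul0r.
rewrite add0n -nneseries_addn //.
under eq_eseriesr => k _.
  have bf := @bin_fact (k + j) j (leq_addl _ _).
  rewrite addnK in bf.
  have -> : ('C(k + j, j)%:R * (t ^+ (k + j) / (k + j)`!%:R) = (t ^+ j / (j`!)%:R) * (t ^+ k / (k`!)%:R))%R.
    rewrite -bf !natrM exprD.
    have fj : (j`!)%:R != 0%R :> R by rewrite pnatr_eq0 -lt0n fact_gt0.
    have fk : (k`!)%:R != 0%R :> R by rewrite pnatr_eq0 -lt0n fact_gt0.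
    have fb : ('C(k + j, j))%:R != 0%R :> R by rewrite pnatr_eq0 -lt0n bin_gt0 leq_addl.
    by field; rewrite fj fk fb.
  rewrite EFinM.
  over.
rewrite nneseriesZl /=; last by move=> k _; rewrite lee_fin divr_ge0 // exprn_ge0.
by rewrite exp_series -EFinM.
Qed.
End Leb.

Section Leb2.
Variable R : realType.
Local Open Scope ereal_scope.
Notation mu := (@lebesgue_measure R).

Definition gk (q k : nat) (t : R) : R :=
  (q.+1%:R * (1 - t) ^+ q * (expR (- t) * (t ^+ k / (k`!)%:R)))%R.

Lemma dens_eq q k (t : R) : (beta1p_density q.+1 t * poisson_mass t k = (gk q k \_ `[0%R, 1%R]%classic) t)%R.
Proof.
rewrite /beta1p_density /poisson_mass /gk patchE.
have -> : (t \in `[0%R, 1%R]%classic) = (0 <= t <= 1)%R.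
  by rewrite /= mem_setE in_itv.
case: ifP => _ /=; last by rewrite mul0r.
by rewrite !mulrA.
Qed.

Lemma mgk q k : measurable_fun setT (gk q k).
Proof.
rewrite /gk.
apply: measurable_funM.
  apply: measurable_funM; first exact: measurable_cst.
  apply: measurable_funX; apply: measurable_funB; [exact: measurable_cst|exact: measurable_id].
apply: measurable_funM.
  apply: measurableT_comp; first exact: measurable_expR.
  exact: oppr_measurable.
apply: measurable_funM; last exact: measurable_cst.
exact: exprn_measurable.
Qed.

Lemma mdens q j k : measurable_fun setT
  (fun t : R => (('C(k, j)%:R * (beta1p_density q.+1 t * poisson_mass t k))%R)%:E).
Proof.
apply/measurable_EFinP; apply: measurable_funM; first exact: measurable_cst.
under eq_fun do rewrite dens_eq.
apply/(measurable_restrictT _ _).1 => //.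
exact: measurable_funS (mgk q k).
Qed.


Lemma mem01 (t : R) : (t \in `[0%R, 1%R]%classic) = (0 <= t <= 1)%R.
Proof. by rewrite /= mem_setE in_itv. Qed.

Lemma Leb_moment q j : \int[mu]_t \sum_(k <oo)
   (('C(k, j)%:R * (beta1p_density q.+1 t * poisson_mass t k))%R)%:E =
  ((q.+1)%:R / (j`!)%:R * beta_fun j.+1 q.+1)%:E.
Proof.
transitivity (\int[mu]_t (((q.+1)%:R / (j`!)%:R)%:E *
   ((@XMonemX R j q \_ `[0%R, 1%R]%classic) t)%:E)).
  apply: eq_integral => t _.
  under eq_eseriesr do rewrite dens_eq.
  rewrite /patch mem01.
  case: ifP => t01.
    move/andP: t01 => [t0 t1].
    set c := (q.+1%:R * (1 - t) ^+ q * expR (- t))%R.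
    have H k : (('C(k, j)%:R * gk q k t)%R%:E = c%:E * ((('C(k, j)%:R * (t ^+ k / (k`!)%:R)))%R%:E)).
      by rewrite /gk -EFinM /c; congr EFin; ring.
    under eq_eseriesr do rewrite H.
    rewrite nneseriesZl; last first.
      by move=> k _; rewrite lee_fin mulr_ge0 // divr_ge0 // exprn_ge0.
    rewrite Ser // -!EFinM; congr EFin.
    rewrite /c /XMonemX expRN.
    have e0 : expR t != 0%R by rewrite gt_eqF // expR_gt0.
    have fj : (j`!)%:R != 0%R :> R by rewrite pnatr_eq0 -lt0n fact_gt0.
    by field; rewrite e0 fj.
  rewrite (_ : point = 0%R) // mule0.
  by rewrite eseries0 // => k _ _; rewrite mulr0.
have E : (beta_fun j.+1 q.+1)%:E = \int[mu]_x ((@XMonemX R j q \_ `[0%R,1%R]%classic) x)%:E :=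
  EFin_beta_fun j.+1 q.+1.
rewrite ge0_integralZl_EFin //.
- by rewrite -E -EFinM.
- move=> t _; rewrite /patch mem01; case: ifP => t01; rewrite lee_fin //.
  by apply: XMonemX_ge0; rewrite in_itv.
- by apply/measurable_EFinP/(measurable_restrictT _ _).1 => //; exact: measurable_XMonemX.
Qed.
End Leb2.

Section Final.
Local Open Scope ereal_scope.
Variables (R : realType) (d : measure_display) (T : measurableType d) (P : probability T R) (Z : T -> nat).
Variable (lam : T -> R).
Hypothesis HZ : forall k, measurable (Z @^-1` [set k]).
Variable q : nat.
Hypothesis Hjoint : forall (A : set R) (k : nat), measurable A ->
     P (lam @^-1` A `&` Z @^-1` [set k]) =
       (\int[lebesgue_measure]_(t in A) (beta1p_density q.+1 t * poisson_mass t k)%:E)%E.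

Lemma dens_ge0 k (t : R) : (0 <= beta1p_density q.+1 t * poisson_mass t k)%R.
Proof.
rewrite dens_eq /patch mem01; case: ifP => // /andP[t0 t1].
rewrite /gk mulr_ge0 // ?mulr_ge0 ?divr_ge0 ?exprn_ge0 ?subr_ge0 // ltW // expR_gt0.
Qed.

Lemma EbinZ j : \int[P]_w ('C(Z w, j)%:R)%:E =
  ((q.+1)%:R / (j`!)%:R * beta_fun j.+1 q.+1)%:E.
Proof.
rewrite (@S1 R d T P Z HZ (fun k => ('C(k, j))%:R)) //.
transitivity (\sum_(k <oo) \int[@lebesgue_measure R]_t
   (('C(k, j)%:R * (beta1p_density q.+1 t * poisson_mass t k))%R)%:E).
  apply: eq_eseriesr => k _.
  have := @Hjoint setT k measurableT; rewrite preimage_setT setTI => ->.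
  under [RHS]eq_integral do rewrite EFinM.
  rewrite ge0_integralZl_EFin //.
  - by move=> t _; rewrite lee_fin dens_ge0.
  - have := @mdens R q 0 k; apply: eq_measurable_fun => t _.
    by rewrite bin0 mul1r.
rewrite -integral_nneseries //.
- exact: Leb_moment.
- by move=> k; exact: mdens.
- by move=> k t _; rewrite lee_fin mulr_ge0 // dens_ge0.
Qed.

End Final.

Theorem mainTheorem16 (R : realType) (d : measure_display) (T : measurableType d)
  (P : probability T R) (p : nat) (lam : {RV P >-> R}) (Z : T -> nat) :
  (1 <= p)%N ->
  (* Z is a (measurable) integer-valued random variable *)
  (forall k : nat, measurable (Z @^-1` [set k])) ->
  (* lambda ~ Beta(1,p) *)
  (forall A : set R, measurable A ->
     P (lam @^-1` A) = (\int[lebesgue_measure]_(t in A) (beta1p_density p t)%:E)%E) ->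
  (* Z | lambda = t ~ Poisson(t): joint law of (lambda, Z) *)
  (forall (A : set R) (k : nat), measurable A ->
     P (lam @^-1` A `&` Z @^-1` [set k]) =
       (\int[lebesgue_measure]_(t in A) (beta1p_density p t * poisson_mass t k)%:E)%E) ->
  forall (n : nat) (x : R),
    ('E_P[fun w => ((x + (Z w)%:R) ^+ n)%R] = (pBell_poly p n x)%:E)%E.
Proof.
move=> p1 HZ Hlam Hjoint n x.
case: p p1 Hlam Hjoint => [//|q] _ _ Hjoint.
have Eb j := @EbinZ R d T P Z lam HZ q Hjoint j.
have intb j : P.-integrable setT (fun w => (('C(Z w, j))%:R)%:E).
  apply/integrableP; split.
    by apply/measurable_EFinP; exact: (@mZ R d T Z HZ (fun k => ('C(k, j))%:R)).
  under eq_integral => w _ do rewrite gee0_abs ?lee_fin //.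
  by rewrite Eb ltry.
rewrite unlock.
transitivity (\int[P]_w (\sum_(j < n.+1) (cc R n x j)%:E * (('C(Z w, j))%:R)%:E))%E.
  apply: eq_integral => w _; rewrite A1 -sumEFin; apply: eq_bigr => j _; by rewrite EFinM.
rewrite integral_sum //; last by move=> j; apply: integrableZl.
under eq_bigr => j _ do rewrite integralZl // Eb -EFinM.
rewrite sumEFin -A2; congr EFin; apply: eq_bigr => j _; congr (_ * _)%R.
rewrite beta_fun_fact.
have bf := @bin_fact (j + q.+1) q.+1 (leq_addl _ _).
rewrite addnK in bf.
rewrite -addnS -bf factS !natrM.
have fj : (j`!)%:R != 0%R :> R by rewrite pnatr_eq0 -lt0n fact_gt0.
have fq : (q`!)%:R != 0%R :> R by rewrite pnatr_eq0 -lt0n fact_gt0.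
have fq1 : (q.+1)%:R != 0%R :> R by rewrite pnatr_eq0.
have fb : ('C(j + q.+1, q.+1))%:R != 0%R :> R by rewrite pnatr_eq0 -lt0n bin_gt0 leq_addl.
field; rewrite ?fj ?fq ?fq1 ?fb //= addrC natr1.
Qed.
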